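(* Consider the attack-free algorithm of the context and let $\widetilde\Lambda^k\in\mathbb R^{J\times D}$ be the matrix whose $i$-th row is $(\lambda_i^k)^\top$. Let $\sigma:=1-\widetilde\kappa\in(0,1)$ and assume the step sizes satisfy, for all $k\ge0$, $$\frac{6(\gamma^k)^2}{u_f^2J^2}\le\frac{(2-\sigma)\sigma^2}{3(3-\sigma)}\qquad\text{and}\qquad1\le\frac{(\gamma^k)^2}{(\gamma^{k+1})^2}\le\frac{2}{1+(1-\sigma^2)}.$$ Then for every $k\ge0$, $$\Big\|\widetilde\Lambda^{k+1}-\tfrac1J\widetilde{\mathbf 1}\widetilde{\mathbf 1}^\top\widetilde\Lambda^{k+1}\Big\|_F^2\le\frac{18(\gamma^{k+1})^2\widetilde\delta^2J}{\sigma^3}.$$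
   Context: Attack-free setting. $J$ agents $\mathcal J=\{1,\dots,J\}$ on an undirected connected graph with neighbor sets $\mathcal N_i$. For each $i$, $f_i:\mathbb R^D\to\mathbb R$ is $u_f$-strongly convex and $L_f$-smooth, $C_i\subset\mathbb R^D$ nonempty compact convex, $s\in\mathbb R^D$. $\widetilde g_i(\lambda)=\frac1J\max_{\theta\in C_i}\{-\lambda^\top\theta-f_i(\theta)\}+\frac1J\lambda^\top s$, with $\nabla\widetilde g_i(\lambda)=\frac1Js-\frac1J\arg\min_{\theta\in C_i}\{\lambda^\top\theta+f_i(\theta)\}$, and $\widetilde\delta^2:=\sup_\lambda\max_{i\in\mathcal J}\|\nabla\widetilde g_i(\lambda)-\frac1J\sum_{j}\nabla\widetilde g_j(\lambda)\|^2<\infty$. $\widetilde E=[\widetilde e_{ij}]\in\mathbb R^{J\times J}$ is doubly stochastic, $\widetilde e_{ij}>0$ iff $(i,j)$ is an edge or $i=j$, and $\widetilde\kappa:=\|\widetilde E-\frac1J\widetilde{\mathbf 1}\widetilde{\mathbf 1}^\top\|^2<1$ (spectral norm, $\widetilde{\mathbf 1}\in\mathbb R^J$ all-ones). Algorithm: common initialization $\lambda_i^0=\lambda^0$; $\theta_i^k=\arg\min_{\theta\in C_i}\{\theta^\top\lambda_i^k+f_i(\theta)\}$, $\lambda_i^{k+1/2}=\lambda_i^k-\gamma^k(\frac1Js-\frac1J\theta_i^k)$, $\lambda_i^{k+1}=\sum_{j\in\mathcal N_i\cup\{i\}}\widetilde e_{ij}\lambda_j^{k+1/2}$. $\|\cdot\|_F$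 is the Frobenius norm. *)

(* Defs.v *)
From HB Require Import structures.
From mathcomp Require Import all_boot all_order all_algebra.
From mathcomp Require Import all_classical all_reals all_analysis.
Set Implicit Arguments. Unset Strict Implicit. Unset Printing Implicit Defensive.
Import Order.TTheory GRing.Theory Num.Theory.
Import numFieldNormedType.Exports.
Local Open Scope classical_set_scope.
Local Open Scope ring_scope.

Section Defs.
Variable R : realType.

Definition dotv (D : nat) (u v : 'rV[R]_D) : R := \sum_(d < D) u 0 d * v 0 d.
Definition sqnorm (D : nat) (u : 'rV[R]_D) : R := dotv u u.
Definition sqnormc (n : nat) (u : 'cV[R]_n) : R := \sum_(i < n) u i 0 ^+ 2.

Definition frob2 (m n : nat) (M : 'M[R]_(m, n)) : R :=
  \sum_(i < m) \sum_(j < n) M i j ^+ 2.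

Definition specnorm2 (n : nat) (M : 'M[R]_n) : R :=
  sup [set r | exists x : 'cV[R]_n, sqnormc x <= 1 /\ r = sqnormc (M *m x)].

Definition cvx_set (D : nat) (C : set 'rV[R]_D) : Prop :=
  forall x y t, C x -> C y -> 0 <= t <= 1 -> C (t *: x + (1 - t) *: y).

Definition strongly_convex (D : nat) (u : R) (f : 'rV[R]_D -> R) : Prop :=
  0 < u /\
  forall x y t, 0 <= t <= 1 ->
    f (t *: x + (1 - t) *: y) <=
      t * f x + (1 - t) * f y - u / 2 * t * (1 - t) * sqnorm (x - y).

Definition is_gradient (D : nat) (f : 'rV[R]_D -> R) (x g : 'rV[R]_D) : Prop :=
  forall eps : R, 0 < eps -> exists2 del : R, 0 < del &
    forall h, sqnorm h < del ^+ 2 ->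
      (f (x + h) - f x - dotv g h) ^+ 2 <= eps ^+ 2 * sqnorm h.

Definition smooth (D : nat) (L : R) (f : 'rV[R]_D -> R) : Prop :=
  exists grad : 'rV[R]_D -> 'rV[R]_D,
    (forall x, is_gradient f x (grad x)) /\
    forall x y, sqnorm (grad x - grad y) <= L ^+ 2 * sqnorm (x - y).

Definition is_argmin (D : nat) (C : set 'rV[R]_D) (f : 'rV[R]_D -> R)
    (lam th : 'rV[R]_D) : Prop :=
  C th /\ forall t, C t -> dotv th lam + f th <= dotv t lam + f t.

(* gradient of g~_i at lambda, with am i lambda = argmin_{theta in C_i} ... *)
Definition grad_g (J D : nat) (s : 'rV[R]_D) (am : 'I_J -> 'rV[R]_D -> 'rV[R]_D)
    (i : 'I_J) (lam : 'rV[R]_D) : 'rV[R]_D :=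
  J%:R^-1 *: s - J%:R^-1 *: am i lam.

Definition delta2_set (J D : nat) (s : 'rV[R]_D) (am : 'I_J -> 'rV[R]_D -> 'rV[R]_D) :=
  [set r | exists lam (i : 'I_J),
         r = sqnorm (grad_g s am i lam - J%:R^-1 *: \sum_(j < J) grad_g s am j lam)].

Definition delta2 (J D : nat) (s : 'rV[R]_D) (am : 'I_J -> 'rV[R]_D -> 'rV[R]_D) : R :=
  sup (delta2_set s am).

Fixpoint lam_iter (J D : nat) (E : 'M[R]_J) (s : 'rV[R]_D)
    (am : 'I_J -> 'rV[R]_D -> 'rV[R]_D) (gam : nat -> R) (lam0 : 'rV[R]_D)
    (k : nat) : 'I_J -> 'rV[R]_D :=
  match k with
  | 0 => fun _ => lam0
  | k'.+1 => fun i =>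
      let prev := lam_iter E s am gam lam0 k' in
      (* lambda_j^{k'+1/2} = lambda_j^{k'} - gam k' (s/J - theta_j^{k'}/J) *)
      \sum_(j < J) E i j *:
        (prev j - gam k' *: (J%:R^-1 *: s - J%:R^-1 *: am j (prev j)))
  end.

Definition Lam_mat (J D : nat) (lam : 'I_J -> 'rV[R]_D) : 'M[R]_(J, D) :=
  \matrix_(i < J, d < D) lam i 0 d.

End Defs.

(* Main.v *)
Require Import Defs.
From HB Require Import structures.
From mathcomp Require Import all_boot all_order all_algebra.
From mathcomp Require Import all_classical all_reals all_analysis.
From mathcomp Require Import ring lra.
Import Order.TTheory GRing.Theory Num.Theory.
Import numFieldNormedType.Exports.
Local Open Scope classical_set_scope.
Local Open Scope ring_scope.
Set Implicit Arguments. Unset Strict Implicit.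

Lemma dotvDl (R : realType) D (a b c : 'rV[R]_D) : dotv (a + b) c = dotv a c + dotv b c.
Proof. rewrite /dotv -big_split; apply: eq_bigr => d _; by rewrite !mxE mulrDl. Qed.
Lemma dotvBl (R : realType) D (a b c : 'rV[R]_D) : dotv (a - b) c = dotv a c - dotv b c.
Proof. rewrite /dotv -sumrB; apply: eq_bigr => d _; by rewrite !mxE mulrBl. Qed.
Lemma dotvZl (R : realType) D k (a c : 'rV[R]_D) : dotv (k *: a) c = k * dotv a c.
Proof. rewrite /dotv mulr_sumr; apply: eq_bigr => d _; by rewrite !mxE mulrA. Qed.
Lemma dotvC (R : realType) D (a c : 'rV[R]_D) : dotv a c = dotv c a.
Proof. rewrite /dotv; apply: eq_bigr => d _; by rewrite mulrC. Qed.
Lemma dotvBr (R : realType) D (a b c : 'rV[R]_D) : dotv c (a - b) = dotv c a - dotv c b.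
Proof. by rewrite !(dotvC c) dotvBl. Qed.
Lemma dotvZr (R : realType) D k (a c : 'rV[R]_D) : dotv c (k *: a) = k * dotv c a.
Proof. by rewrite !(dotvC c) dotvZl. Qed.
Lemma dotvDr (R : realType) D (a b c : 'rV[R]_D) : dotv c (a + b) = dotv c a + dotv c b.
Proof. by rewrite !(dotvC c) dotvDl. Qed.
Lemma sqnorm_ge0 (R : realType) D (a : 'rV[R]_D) : 0 <= sqnorm a.
Proof. rewrite /sqnorm /dotv; apply: sumr_ge0 => d _; rewrite -expr2; exact: sqr_ge0. Qed.
Lemma sqnormN (R : realType) D (a b : 'rV[R]_D) : sqnorm (a - b) = sqnorm (b - a).
Proof. rewrite /sqnorm /dotv; apply: eq_bigr => d _; by rewrite !mxE; ring. Qed.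

Lemma amgm (R : realType) D (t : R) (x y : 'rV[R]_D) : 0 < t ->
  2 * dotv x y <= t * sqnorm x + sqnorm y / t.
Proof.
move=> t0; rewrite /sqnorm /dotv mulr_sumr mulr_sumr mulr_suml -big_split /=.
apply: ler_sum => d _.
set a := x 0 d; set b := y 0 d.
have -> : t * (a * a) + b * b / t = 2 * (a * b) + (t * a - b) ^+ 2 / t.
  by field; rewrite gt_eqF.
rewrite lerDl; apply: divr_ge0; [exact: sqr_ge0 | exact: ltW].
Qed.

Lemma argmin_gap (R : realType) D (C : set 'rV[R]_D) f u lam th ph :
  strongly_convex u f -> cvx_set C -> is_argmin C f lam th -> C ph ->
  dotv th lam + f th + 2 * u / 5 * sqnorm (th - ph) <= dotv ph lam + f ph.
Proof.
move=> [u0 sc] cvx [Cth min] Cph.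
have Cm := cvx th ph (4/5) Cth Cph.
have h01 : 0 <= (4/5 : R) <= 1 by apply/andP; split; lra.
have := min _ (Cm h01); have := sc th ph (4/5) h01.
rewrite dotvDl !dotvZl.
have -> : (1 - 4/5 : R) = 1/5 by lra.
move=> h1 h2; nra.
Qed.

Lemma argmin_lip (R : realType) D (C : set 'rV[R]_D) f u lam mu th ph :
  strongly_convex u f -> cvx_set C -> is_argmin C f lam th -> is_argmin C f mu ph ->
  sqnorm (th - ph) <= 25/16 / u ^+ 2 * sqnorm (lam - mu).
Proof.
move=> sc cvx a1 a2.
have u0 : 0 < u by case: sc.
have g1 := argmin_gap sc cvx a1 (proj1 a2).
have g2 := argmin_gap sc cvx a2 (proj1 a1).
rewrite sqnormN in g2.
have key : 4 * u / 5 * sqnorm (th - ph) <= dotv (th - ph) (mu - lam).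
  rewrite dotvBl !dotvBr; lra.
have am := amgm (th - ph) (mu - lam) (_ : 0 < 4 * u / 5).
have hY : sqnorm (mu - lam) = sqnorm (lam - mu) by rewrite sqnormN.
rewrite hY in am.
set d := sqnorm (th - ph) in key am *; set Y := sqnorm (lam - mu) in am *.
have {}am := am (ltac:(lra)).
have : 4 * u / 5 * d <= Y / (4 * u / 5) by lra.
move=> h.
have e : 25/16/u^+2 * Y = (Y/(4*u/5)) / (4*u/5).
  by field; rewrite gt_eqF.
rewrite e ler_pdivlMr; last lra.
by rewrite mulrC.
Qed.

Lemma sqnormc_ge0 (R : realType) n (x : 'cV[R]_n) : 0 <= sqnormc x.
Proof. apply: sumr_ge0 => i _; exact: sqr_ge0. Qed.

Lemma sqnormcZ (R : realType) n (c : R) (x : 'cV[R]_n) : sqnormc (c *: x) = c ^+ 2 * sqnormc x.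
Proof. rewrite /sqnormc mulr_sumr; apply: eq_bigr => i _; by rewrite mxE exprMn. Qed.

Lemma spec_ub (R : realType) n (W : 'M[R]_n) :
  has_ubound [set r | exists x : 'cV[R]_n, sqnormc x <= 1 /\ r = sqnormc (W *m x)].
Proof.
exists (\sum_(i < n) (\sum_(j < n) `|W i j|) ^+ 2) => r [x [hx ->]].
rewrite /sqnormc; apply: ler_sum => i _.
have hxj : forall j, `|x j 0| <= 1.
  move=> j; have : x j 0 ^+ 2 <= 1.
    apply: le_trans hx; rewrite /sqnormc (bigD1 j) //= lerDl.
    by apply: sumr_ge0 => k _; exact: sqr_ge0.
  rewrite -real_normK ?num_real // => h.
  have h0 := normr_ge0 (x j 0); nra.
have hs : `|(W *m x) i 0| <= \sum_(j < n) `|W i j|.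
  rewrite mxE; apply: le_trans (ler_norm_sum _ _ _) _.
  apply: ler_sum => j _; rewrite normrM.
  have := hxj j; have := normr_ge0 (W i j); have := normr_ge0 (x j 0); nra.
rewrite -real_normK ?num_real //.
have h0 := normr_ge0 ((W *m x) i 0); nra.
Qed.

Lemma spec_ge0 (R : realType) n (W : 'M[R]_n) : 0 <= specnorm2 W.
Proof.
apply: (ub_le_sup (spec_ub W)); exists 0; split.
  by rewrite /sqnormc big1 // => i _; rewrite mxE expr0n.
by rewrite mulmx0 /sqnormc big1 // => i _; rewrite mxE expr0n.
Qed.

Lemma spec_bound (R : realType) n (W : 'M[R]_n) (x : 'cV[R]_n) :
  sqnormc (W *m x) <= specnorm2 W * sqnormc x.
Proof.
have [z0|zpos] := eqVneq (sqnormc x) 0.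
  have x0 : x = 0.
    apply/matrixP => i j; rewrite (ord1 j) mxE.
    have := psumr_eq0P (fun k _ => sqr_ge0 (x k 0)) z0 (erefl true : true).
    by move/(_ i)/eqP; rewrite sqrf_eq0 => /eqP.
  by rewrite z0 x0 mulmx0 mulr0 /sqnormc big1 // => i _; rewrite mxE expr0n.
have p : 0 < sqnormc x by rewrite lt_neqAle eq_sym zpos sqnormc_ge0.
set q := Num.sqrt (sqnormc x).
have q0 : 0 < q by rewrite sqrtr_gt0.
have qq : q ^+ 2 = sqnormc x by rewrite sqr_sqrtr // ltW.
have h : sqnormc (W *m (q^-1 *: x)) <= specnorm2 W.
  apply: (ub_le_sup (spec_ub W)); exists (q^-1 *: x); split => //.
  rewrite sqnormcZ exprVn qq mulVf //; exact: gt_eqF.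
move: h; rewrite -scalemxAr sqnormcZ => h.
rewrite -(@ler_pM2l _ (q^-1 ^+ 2)); last by rewrite exprn_gt0 // invr_gt0.
apply: le_trans h _.
rewrite -qq mulrCA exprVn mulVf ?mulr1 //.
by rewrite gt_eqF // exprn_gt0.
Qed.

Lemma center_sum (R : realType) J (a : 'I_J -> R) : (0 < J)%N ->
  \sum_(j < J) (a j - J%:R^-1 * \sum_(k < J) a k) ^+ 2 <= \sum_(j < J) a j ^+ 2.
Proof.
move=> hJ.
have J0 : (J%:R : R) != 0 by rewrite pnatr_eq0 -lt0n.
set S := \sum_(k < J) a k; set m := J%:R^-1 * S.
rewrite (eq_bigr (fun j => a j ^+ 2 - 2 * m * a j + m ^+ 2)); last by move=> j _; ring.
rewrite big_split sumrB /= -mulr_sumr sumr_const card_ord -/S.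
have -> : S = J%:R * m by rewrite /m mulrA mulfV // mul1r.
rewrite -[_ *+ J]mulr_natr.
have : 0 <= m ^+ 2 * J%:R by apply: mulr_ge0; [exact: sqr_ge0 | exact: ler0n].
set A := \sum_(i < J) _.
move=> h; nra.
Qed.

Lemma mix_center (R : realType) J (E : 'M[R]_J) (a : 'I_J -> R) i : (0 < J)%N ->
  (forall i, \sum_(j < J) E i j = 1) -> (forall j, \sum_(i < J) E i j = 1) ->
  \sum_(j < J) E i j * a j - J%:R^-1 * \sum_(i' < J) \sum_(j < J) E i' j * a j
  = \sum_(j < J) (E i j - J%:R^-1) * (a j - J%:R^-1 * \sum_(k < J) a k).
Proof.
move=> hJ Er Ec.
have J0 : (J%:R : R) != 0 by rewrite pnatr_eq0 -lt0n.
rewrite exchange_big /=.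
have -> : \sum_(j < J) \sum_(i0 < J) E i0 j * a j = \sum_(j < J) a j.
  by apply: eq_bigr => j _; rewrite -mulr_suml Ec mul1r.
set S := \sum_(k < J) a k; set m := J%:R^-1 * S.
rewrite [RHS](eq_bigr (fun j => E i j * a j - m * E i j - J%:R^-1 * a j + J%:R^-1 * m)); last by move=> j _; rewrite /m; ring.
rewrite big_split sumrB sumrB /= -!mulr_sumr Er sumr_const card_ord -/S.
rewrite -mulr_natr /m; field.
by rewrite J0.
Qed.

Lemma pointwise (R : realType) (sig x g p : R) : 0 < sig ->
  (1 - sig) * (x - g * p) ^+ 2 <= (1 - sig / 2) * x ^+ 2 + (1 - sig) * (2 - sig) / sig * g ^+ 2 * p ^+ 2.
Proof.
move=> s0.
have -> : (1 - sig / 2) * x ^+ 2 + (1 - sig) * (2 - sig) / sig * g ^+ 2 * p ^+ 2 =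
  (1 - sig) * (x - g * p) ^+ 2 + sig / 2 * (x + 2 * (1 - sig) / sig * g * p) ^+ 2.
  by field; rewrite gt_eqF.
rewrite lerDl; apply: mulr_ge0; last exact: sqr_ge0.
apply: divr_ge0; [exact: ltW | lra].
Qed.

Lemma final_ineq (R : realType) (sig Dl e e' b g g' : R) :
  0 < sig -> sig <= 1 -> 0 <= Dl -> 0 <= e -> 0 <= b ->
  6 * b <= (2 - sig) * sig ^+ 2 / (3 * (3 - sig)) ->
  e <= 18 * Dl / sig ^+ 3 * g ^+ 2 ->
  g ^+ 2 <= 2 / (2 - sig ^+ 2) * g' ^+ 2 ->
  e' <= (1 - sig / 2) * e + (1 - sig) * (2 - sig) / sig * (25 / 8 * b * e + 2 * g ^+ 2 * Dl) ->
  e' <= 18 * Dl / sig ^+ 3 * g' ^+ 2.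
Proof.
move=> s0 s1 D0 e0 b0 hb he hg he'.
set K := 18 * Dl / sig ^+ 3.
have K0 : 0 <= K by rewrite /K; apply: divr_ge0; [lra | apply: exprn_ge0; lra].
set c1 := (1 - sig) * (2 - sig) / sig.
have c10 : 0 <= c1 by rewrite /c1; apply: divr_ge0; [nra | lra].
have g0 : 0 <= g ^+ 2 := sqr_ge0 g.
have hbK : b * K <= (2 - sig) * Dl / (sig * (3 - sig)).
  have -> : (2 - sig) * Dl / (sig * (3 - sig)) = (2 - sig) * sig ^+ 2 / (3 * (3 - sig)) / 6 * K.
    have s3 : 3 - sig != 0 by rewrite gt_eqF //; lra.
    by rewrite /K; field; rewrite (gt_eqF s0) s3.
  set c := (2 - sig) * sig ^+ 2 / (3 * (3 - sig)) in hb *.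
  nra.
set B := (1 - sig / 2) * K + c1 * (25 / 8 * ((2 - sig) * Dl / (sig * (3 - sig))) + 2 * Dl).
have h1 : e' <= g ^+ 2 * B.
  apply: (le_trans he'); rewrite /B.
  have h2 : (1 - sig / 2) * e <= (1 - sig / 2) * (K * g ^+ 2) by apply: ler_wpM2l => //; lra.
  have h3 : b * e <= b * (K * g ^+ 2) by apply: ler_wpM2l.
  have h4 : b * (K * g ^+ 2) <= (2 - sig) * Dl / (sig * (3 - sig)) * g ^+ 2.
    by rewrite mulrA; apply: ler_wpM2r.
  have h5 : 25 / 8 * b * e + 2 * g ^+ 2 * Dl <= g ^+ 2 * (25 / 8 * ((2 - sig) * Dl / (sig * (3 - sig))) + 2 * Dl) by nra.
  have h6 := ler_wpM2l c10 h5.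
  have -> : g ^+ 2 * ((1 - sig / 2) * K + c1 * (25 / 8 * ((2 - sig) * Dl / (sig * (3 - sig))) + 2 * Dl))
    = (1 - sig / 2) * (K * g ^+ 2) + c1 * (g ^+ 2 * (25 / 8 * ((2 - sig) * Dl / (sig * (3 - sig))) + 2 * Dl)) by ring.
  exact: lerD.
have s3 : 3 - sig != 0 by rewrite gt_eqF //; lra.
have s2 : 2 - sig ^+ 2 != 0 by rewrite gt_eqF //; nra.
have hB : B <= K * (2 - sig ^+ 2) / 2.
  rewrite -subr_ge0.
  have -> : K * (2 - sig ^+ 2) / 2 - B = (1 - sig) * Dl * (116 - 68 * sig + 55 * sig ^+ 2 - 16 * sig ^+ 3) / (8 * sig ^+ 2 * (3 - sig)).
    by rewrite /B /c1 /K; field; rewrite (gt_eqF s0) s3.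
  apply: divr_ge0; last by apply: mulr_ge0; [apply: mulr_ge0; [lra|exact: sqr_ge0] | lra].
  apply: mulr_ge0; first by apply: mulr_ge0; lra.
  have q1 : sig ^+ 2 <= sig by rewrite expr2; nra.
  have q2 : sig ^+ 3 <= sig by rewrite exprS; nra.
  have : 0 <= sig ^+ 2 := sqr_ge0 sig.
  lra.
have k2 : 0 <= K * (2 - sig ^+ 2) / 2.
  by apply: divr_ge0; [apply: mulr_ge0 => //; nra | lra].
apply: (le_trans h1).
apply: (le_trans (ler_wpM2l g0 hB)).
apply: (le_trans (ler_wpM2r k2 hg)).
rewrite le_eqVlt; apply/orP; left; apply/eqP.
by field.
Qed.

Definition cs (R : realType) J D (v : 'I_J -> 'rV[R]_D) : R :=
  \sum_(j < J) \sum_(d < D) (v j 0 d - J%:R^-1 * \sum_(k < J) v k 0 d) ^+ 2.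

Lemma frob_cs (R : realType) J D (l : 'I_J -> 'rV[R]_D) :
  frob2 (Lam_mat l - J%:R^-1 *: (const_mx 1 *m Lam_mat l)) = cs l.
Proof.
apply: eq_bigr => i _; apply: eq_bigr => d _; rewrite !mxE.
congr ((_ - _ * _) ^+ 2); by apply: eq_bigr => j _; rewrite !mxE mul1r.
Qed.

Lemma sqnorm_sum (R : realType) D (v : 'rV[R]_D) : sqnorm v = \sum_(d < D) v 0 d ^+ 2.
Proof. by apply: eq_bigr => d _; rewrite expr2. Qed.

Lemma cs_ge0 (R : realType) J D (v : 'I_J -> 'rV[R]_D) : 0 <= cs v.
Proof. by apply: sumr_ge0 => j _; apply: sumr_ge0 => d _; exact: sqr_ge0. Qed.

Lemma sq_split (R : realType) (p q : R) : (p + q) ^+ 2 <= 2 * p ^+ 2 + 2 * q ^+ 2.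
Proof. have := sqr_ge0 (p - q); nra. Qed.

Lemma delta_bound (R : realType) J D (s : 'rV[R]_D) am (lam : 'rV[R]_D) (i : 'I_J) :
  has_ubound (delta2_set s am) ->
  sqnorm (grad_g s am i lam - J%:R^-1 *: \sum_(j < J) grad_g s am j lam) <= delta2 s am.
Proof. by move=> ub; apply: (ub_le_sup ub); exists lam, i. Qed.

Lemma PP_bound (R : realType) J D (hJ : (0 < J)%N) (s : 'rV[R]_D) am (u : R)
  (l : 'I_J -> 'rV[R]_D)
  (lip : forall j lam mu, sqnorm (am j lam - am j mu) <= 25/16 / u ^+ 2 * sqnorm (lam - mu))
  (dfin : has_ubound (delta2_set s am)) :
  cs (fun j => grad_g s am j (l j)) <=
    25/8 / (u ^+ 2 * J%:R ^+ 2) * cs l + 2 * J%:R * delta2 s am.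
Proof.
have J0 : (J%:R : R) != 0 by rewrite pnatr_eq0 -lt0n.
set lb := J%:R^-1 *: \sum_(k < J) l k.
set a := fun j d => grad_g s am j (l j) 0 d - grad_g s am j lb 0 d.
set h := fun j d => grad_g s am j lb 0 d.
have stepA : cs (fun j => grad_g s am j (l j)) <=
   2 * (\sum_(j < J) \sum_(d < D) (a j d - J%:R^-1 * \sum_(k < J) a k d) ^+ 2)
 + 2 * (\sum_(j < J) \sum_(d < D) (h j d - J%:R^-1 * \sum_(k < J) h k d) ^+ 2).
  rewrite !mulr_sumr -big_split; apply: ler_sum => j _.
  rewrite !mulr_sumr -big_split; apply: ler_sum => d _ /=.
  apply: le_trans (sq_split _ _); rewrite le_eqVlt; apply/orP; left; apply/eqP.
  congr (_ ^+ 2).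
  have -> : \sum_(k < J) grad_g s am k (l k) 0 d = \sum_(k < J) a k d + \sum_(k < J) h k d.
    by rewrite -big_split; apply: eq_bigr => k _; rewrite /a /h /=; ring.
  rewrite /a /h /=; ring.
have stepB : \sum_(j < J) \sum_(d < D) (a j d - J%:R^-1 * \sum_(k < J) a k d) ^+ 2
    <= J%:R^-1 ^+ 2 * (25/16 / u ^+ 2) * cs l.
  rewrite exchange_big /=.
  apply: le_trans (_ : \sum_(d < D) \sum_(j < J) a j d ^+ 2 <= _).
    by apply: ler_sum => d _; apply: center_sum.
  rewrite exchange_big /= /cs !mulr_sumr; apply: ler_sum => j _.
  have e1 : \sum_(d < D) a j d ^+ 2 = J%:R^-1 ^+ 2 * sqnorm (am j lb - am j (l j)).
    rewrite sqnorm_sum mulr_sumr; apply: eq_bigr => d _.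
    by rewrite /a /grad_g !mxE; ring.
  have e2 : sqnorm (lb - l j) = \sum_(d < D) (l j 0 d - J%:R^-1 * \sum_(k < J) l k 0 d) ^+ 2.
    rewrite sqnorm_sum; apply: eq_bigr => d _.
    by rewrite /lb !mxE summxE; ring.
  rewrite e1 -e2 -(mulrA (J%:R^-1 ^+ 2)); apply: ler_wpM2l; first exact: sqr_ge0.
  exact: lip.
have stepC : \sum_(j < J) \sum_(d < D) (h j d - J%:R^-1 * \sum_(k < J) h k d) ^+ 2
    <= J%:R * delta2 s am.
  have -> : J%:R * delta2 s am = \sum_(j < J) delta2 s am.
    by rewrite sumr_const card_ord mulr_natl.
  apply: ler_sum => j _.
  apply: le_trans (delta_bound lb j dfin).
  rewrite sqnorm_sum le_eqVlt; apply/orP; left; apply/eqP.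
  apply: eq_bigr => d _; rewrite /h !mxE summxE //.
apply: (le_trans stepA).
have -> : 25/8 / (u ^+ 2 * J%:R ^+ 2) * cs l = 2 * (J%:R^-1 ^+ 2 * (25/16 / u ^+ 2) * cs l).
  rewrite exprVn; have [->|u0] := eqVneq u 0.
    by rewrite expr0n /= !(mul0r, invr0, mulr0).
  by field; rewrite u0 J0.
lra.
Qed.

Lemma step_bound (R : realType) J D (hJ : (0 < J)%N) (E : 'M[R]_J)
  (Er : forall i, \sum_(j < J) E i j = 1) (Ec : forall j, \sum_(i < J) E i j = 1)
  (l G l' : 'I_J -> 'rV[R]_D) (g sig : R)
  (hl' : forall i d, l' i 0 d = \sum_(j < J) E i j * (l j 0 d - g * G j 0 d))
  (hsig : sig = 1 - specnorm2 (E - J%:R^-1 *: const_mx 1)) (s0 : 0 < sig) :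
  cs l' <=
    (1 - sig / 2) * cs l + (1 - sig) * (2 - sig) / sig * g ^+ 2 * cs G.
Proof.
set W := E - J%:R^-1 *: const_mx 1.
set z := fun j d => l j 0 d - g * G j 0 d.
set y := fun j d => z j d - J%:R^-1 * \sum_(k < J) z k d.
have e1 : cs l' =
    \sum_(d < D) sqnormc (W *m \col_(j < J) y j d).
  rewrite /cs exchange_big; apply: eq_bigr => d _.
  apply: eq_bigr => i _; cbv beta.
  rewrite (hl' i d) [X in _ * X](eq_bigr (fun k => \sum_(j < J) E k j * z j d)); last by move=> k _; rewrite (hl' k d).
  rewrite mix_center // mxE; congr (_ ^+ 2); apply: eq_bigr => j _.
  by rewrite !mxE mulr1.
rewrite e1.
apply: le_trans (_ : \sum_(d < D) (1 - sig) * \sum_(j < J) y j d ^+ 2 <= _).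
  apply: ler_sum => d _; rewrite hsig opprB addrC subrK.
  apply: le_trans (spec_bound _ _) _; rewrite le_eqVlt; apply/orP; left; apply/eqP.
  by congr (_ * _); apply: eq_bigr => j _; rewrite mxE.
pose x : 'I_J -> 'I_D -> R := fun j d => l j 0 d - J%:R^-1 * \sum_(k < J) l k 0 d.
pose p : 'I_J -> 'I_D -> R := fun j d => G j 0 d - J%:R^-1 * \sum_(k < J) G k 0 d.
set RR := \sum_(j < J) \sum_(d < D)
   ((1 - sig / 2) * x j d ^+ 2 + (1 - sig) * (2 - sig) / sig * g ^+ 2 * p j d ^+ 2).
have H1 : \sum_(d < D) (1 - sig) * \sum_(j < J) y j d ^+ 2 <= RR.
  rewrite [X in _ <= X]exchange_big; apply: ler_sum => d _.
  rewrite mulr_sumr; apply: ler_sum => j _.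
  have -> : y j d = x j d - g * p j d.
    rewrite /y /z /x /p sumrB -mulr_sumr; ring.
  apply: le_trans (pointwise _ _ _ s0) _.
  by rewrite le_eqVlt; apply/orP; left; apply/eqP; rewrite !mulrA.
apply: le_trans H1 _.
rewrite /RR /cs !mulr_sumr -big_split /=; apply: ler_sum => j _.
rewrite !mulr_sumr -big_split /=; apply: ler_sum => d _.
by rewrite le_eqVlt; apply/orP; left; apply/eqP.
Qed.

Unset Implicit Arguments.

Theorem lemma8 (R : realType) (J D : nat) (hJ : (0 < J)%N)
  (adj : rel 'I_J)
  (adj_sym : forall i j, adj i j = adj j i)
  (adj_irr : forall i, ~~ adj i i)
  (adj_conn : forall i j, connect adj i j)
  (f : 'I_J -> 'rV[R]_D -> R) (uf Lf : R)
  (f_sc : forall i, strongly_convex uf (f i))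
  (f_sm : forall i, smooth Lf (f i))
  (C : 'I_J -> set 'rV[R]_D)
  (C_ne : forall i, C i !=set0)
  (C_cpt : forall i, compact (C i))
  (C_cvx : forall i, cvx_set (C i))
  (s : 'rV[R]_D)
  (am : 'I_J -> 'rV[R]_D -> 'rV[R]_D)
  (am_spec : forall i lam, is_argmin (C i) (f i) lam (am i lam))
  (delta_fin : has_ubound (delta2_set s am))
  (E : 'M[R]_J)
  (E_nonneg : forall i j, 0 <= E i j)
  (E_row : forall i, \sum_(j < J) E i j = 1)
  (E_col : forall j, \sum_(i < J) E i j = 1)
  (E_pos : forall i j, (0 < E i j) <-> (adj i j \/ i = j))
  (kappa_lt1 : specnorm2 (E - J%:R^-1 *: const_mx 1) < 1)
  (lam0 : 'rV[R]_D) (gam : nat -> R)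
  (gam_c1 : forall k,
     6 * gam k ^+ 2 / (uf ^+ 2 * J%:R ^+ 2)
       <= let sig := 1 - specnorm2 (E - J%:R^-1 *: const_mx 1) in
          (2 - sig) * sig ^+ 2 / (3 * (3 - sig)))
  (gam_c2 : forall k,
     let sig := 1 - specnorm2 (E - J%:R^-1 *: const_mx 1) in
     1 <= gam k ^+ 2 / gam k.+1 ^+ 2 <= 2 / (1 + (1 - sig ^+ 2))) :
  forall k : nat,
    let sig := 1 - specnorm2 (E - J%:R^-1 *: const_mx 1) in
    let L := Lam_mat (lam_iter E s am gam lam0 k.+1) in
    frob2 (L - J%:R^-1 *: (const_mx 1 *m L))
      <= 18 * gam k.+1 ^+ 2 * delta2 s am * J%:R / sig ^+ 3.
Proof.
move=> k0; cbv zeta.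
have J0 : (J%:R : R) != 0 by rewrite pnatr_eq0 -lt0n.
have Jp : (0 : R) < J%:R by rewrite ltr0n.
set sg := 1 - specnorm2 (E - J%:R^-1 *: const_mx 1).
have s0 : 0 < sg by rewrite /sg subr_gt0.
have s1 : sg <= 1 by have := spec_ge0 (E - J%:R^-1 *: const_mx 1); rewrite /sg; lra.
set i0 : 'I_J := Ordinal hJ.
have u0 : 0 < uf by case: (f_sc i0).
have lip : forall j lam mu, sqnorm (am j lam - am j mu) <= 25/16 / uf ^+ 2 * sqnorm (lam - mu).
  by move=> j lam mu; exact: argmin_lip (f_sc j) (C_cvx j) (am_spec j lam) (am_spec j mu).
have d0 : 0 <= delta2 s am.
  exact: le_trans (sqnorm_ge0 _) (delta_bound lam0 i0 delta_fin).
set lm := lam_iter E s am gam lam0.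
set Dl := J%:R * delta2 s am.
have Dl0 : 0 <= Dl by apply: mulr_ge0 => //; exact: ltW.
have claim : forall k, cs (lm k) <= 18 * Dl / sg ^+ 3 * gam k ^+ 2.
  elim => [|k IH].
    have -> : cs (lm 0%N) = 0.
      rewrite /cs big1 // => j _; rewrite big1 // => d _.
      have -> : \sum_(k < J) lm 0%N k 0 d = \sum_(k < J) lam0 0 d by apply: eq_bigr.
      have -> : lm 0%N j 0 d = lam0 0 d by [].
      by rewrite sumr_const card_ord -[lam0 0 d *+ J]mulr_natl mulrA mulVf // mul1r subrr expr0n.
    apply: mulr_ge0; last exact: sqr_ge0.
    apply: divr_ge0; [lra | apply: exprn_ge0; lra].
  set G := fun j => grad_g s am j (lm k j).
  have hl' : forall i d, lm k.+1 i 0 d = \sum_(j < J) E i j * (lm k j 0 d - gam k * G j 0 d).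
    move=> i d; rewrite /lm /= summxE; apply: eq_bigr => j _.
    by rewrite /G /grad_g !mxE.
  have st := step_bound hJ E_row E_col hl' (erefl sg) s0.
  have pp := PP_bound hJ (lm k) lip delta_fin.
  have c1 : 0 <= (1 - sg) * (2 - sg) / sg * gam k ^+ 2.
    apply: mulr_ge0; last exact: sqr_ge0.
    apply: divr_ge0; [nra | lra].
  have [g1 g2] : 1 <= gam k ^+ 2 / gam k.+1 ^+ 2 /\ gam k ^+ 2 / gam k.+1 ^+ 2 <= 2 / (2 - sg ^+ 2).
    have := gam_c2 k; cbv zeta; rewrite -/sg => /andP [h1 h2]; split => //.
    by have -> : 2 - sg ^+ 2 = 1 + (1 - sg ^+ 2) by ring.
  have gn0 : gam k.+1 ^+ 2 != 0.
    apply/negP => /eqP h; move: g1; rewrite h invr0 mulr0; lra.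
  have hg : gam k ^+ 2 <= 2 / (2 - sg ^+ 2) * gam k.+1 ^+ 2.
    have -> : gam k ^+ 2 = gam k ^+ 2 / gam k.+1 ^+ 2 * gam k.+1 ^+ 2.
      by rewrite -mulrA mulVf ?mulr1.
    apply: ler_wpM2r => //; exact: sqr_ge0.
  apply: (final_ineq (sig := sg) (Dl := Dl) (e := cs (lm k)) (e' := cs (lm k.+1)) (b := gam k ^+ 2 / (uf ^+ 2 * J%:R ^+ 2)) (g := gam k) (g' := gam k.+1)) => //.
  - exact: cs_ge0.
  - apply: divr_ge0; first exact: sqr_ge0.
    by apply: mulr_ge0; apply: sqr_ge0.
  - have := gam_c1 k; cbv zeta; rewrite -/sg; by rewrite mulrA.
  - apply: (le_trans st).
    have := ler_wpM2l c1 pp => h.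
    set e := cs (lm k) in h *.
    set PG := cs G in h *.
    set c := (1 - sg) * (2 - sg) / sg in h c1 *.
    have -> : c * (25 / 8 * (gam k ^+ 2 / (uf ^+ 2 * J%:R ^+ 2)) * e + 2 * gam k ^+ 2 * Dl)
      = c * gam k ^+ 2 * (25 / 8 / (uf ^+ 2 * J%:R ^+ 2) * e + 2 * J%:R * delta2 s am).
      by rewrite /Dl; ring.
    by apply: lerD => //.
rewrite frob_cs.
apply: (le_trans (claim k0.+1)).
rewrite le_eqVlt; apply/orP; left; apply/eqP.
by rewrite /Dl; ring.
Qed.
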